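(* Let $H$ be a finite simple graph on vertex set $\{x_1,\dots,x_n\}$ and $G=w(H)$, a graph on $2n$ vertices, and suppose $|E(G)|\ge n+1$. Let $\mathbb{K}$ be a field whose characteristic is a prime $p\neq 2$, let $A=A(G)$ be the Artinian algebra of $G$ over $\mathbb{K}$, and let $\ell=x_1+\dots+x_n+y_1+\dots+y_n$ be the sum of the variables. Then the multiplication map $\times\ell:A_i\to A_{i+1}$ has maximal rank (i.e. rank $\min\{\dim_{\mathbb{K}}A_i,\dim_{\mathbb{K}}A_{i+1}\}$) for $i=1$ and for $i=n-1$.
   Context: For a graph $H$ with vertex set $\{x_1,\dots,x_n\}$, the whiskered graph $w(H)$ has vertex set $\{x_1,\dots,x_n,y_1,\dots,y_n\}$ and edge set $E(H)\cup\{\{x_i,y_i\}: i=1,\dots,n\}$. For a graph $G$ on vertices $z_1,\dots,z_m$, its Artinian algebra over $\mathbb{K}$ is $A(G)=\mathbb{K}[z_1,\dots,z_m]/(\langle z_1^2,\dots,z_m^2\rangle+I(G))$, where $I(G)=\langle z_iz_j:\{z_i,z_j\}\in E(G)\rangle$ is the edge ideal; it is standard graded, $A=\bigoplus_i A_i$. *)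

(* Defs.v *)
From HB Require Import structures.
From mathcomp Require Import all_boot all_order all_algebra.
From mathcomp Require Import mpoly.
Set Implicit Arguments. Unset Strict Implicit. Unset Printing Implicit Defensive.
Import GRing.Theory.
Local Open Scope ring_scope.

Definition simple_graph (m : nat) (e : rel 'I_m) : Prop :=
  (forall u v, e u v = e v u) /\ (forall u, ~~ e u u).

Definition nedges (m : nat) (e : rel 'I_m) : nat :=
  #|[set uv : 'I_m * 'I_m | (uv.1 < uv.2)%N && e uv.1 uv.2]|.

(* Whiskered graph w(H): vertex lshift n i is x_i, rshift n i is y_i. *)
Definition whisker (n : nat) (e : rel 'I_n) : rel 'I_(n + n) :=
  fun u v =>
    match split u, split v with
    | inl i, inl j => e i j
    | inl i, inr j => i == j
    | inr i, inl j => i == j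
    | inr _, inr _ => false
    end.

Definition artin_gens (K : fieldType) (m : nat) (e : rel 'I_m)
  : seq {mpoly K[m]} :=
  [seq 'X_u ^+ 2 | u <- enum 'I_m] ++
  [seq 'X_uv.1 * 'X_uv.2 | uv <- enum [pred uv : 'I_m * 'I_m | e uv.1 uv.2]].

Definition in_ideal (K : fieldType) (m : nat) (gs : seq {mpoly K[m]})
  (p : {mpoly K[m]}) : Prop :=
  exists cs : 'I_(size gs) -> {mpoly K[m]},
    p = \sum_(j < size gs) cs j * gs`_j.

Definition indep_mod (K : fieldType) (m : nat) (gs : seq {mpoly K[m]})
  (r : nat) (s : 'I_r -> {mpoly K[m]}) : Prop :=
  forall c : 'I_r -> K,
    in_ideal gs (\sum_(j < r) c j *: s j) -> forall j, c j = 0.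

(* [qdim gs P d]: the K-span of the classes of the elements of P in
   K[z]/<gs> has dimension d (d = max size of an independent family). *)
Definition qdim (K : fieldType) (m : nat) (gs : seq {mpoly K[m]})
  (P : {mpoly K[m]} -> Prop) (d : nat) : Prop :=
  (exists s : 'I_d -> {mpoly K[m]}, (forall j, P (s j)) /\ indep_mod gs s) /\
  (forall s : 'I_d.+1 -> {mpoly K[m]}, (forall j, P (s j)) -> ~ indep_mod gs s).

(* dim_K A(G)_i = d  (A_i is the image of the degree-i forms). *)
Definition dimA (K : fieldType) (m : nat) (e : rel 'I_m) (i d : nat) : Prop :=
  qdim (artin_gens K e) (fun p => p \is i.-homog) d.

(* rank of the multiplication map  x l : A_i -> A_{i+1}  is r, i.e. the
   image  l * A_i  inside A_{i+1} has dimension r. *)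
Definition rank_mul (K : fieldType) (m : nat) (e : rel 'I_m)
  (l : {mpoly K[m]}) (i r : nat) : Prop :=
  qdim (artin_gens K e) (fun q => exists f, f \is i.-homog /\ q = l * f) r.

Definition max_rank_at (K : fieldType) (m : nat) (e : rel 'I_m)
  (l : {mpoly K[m]}) (i : nat) : Prop :=
  exists a b r, dimA K e i a /\ dimA K e i.+1 b /\ rank_mul e l i r /\ r = minn a b.

Definition sum_vars (K : fieldType) (m : nat) : {mpoly K[m]} :=
  \sum_(u < m) 'X_u.

(* Main.v *)
Require Import Defs.
From HB Require Import structures.
From mathcomp Require Import all_boot all_order all_algebra.
From mathcomp Require Import mpoly.
From mathcomp Require Import ring zify.
From Stdlib Require Import Classical ClassicalEpsilon.
Set Implicit Arguments. Unset Strict Implicit. Unset Printing Implicit Defensive.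
Import GRing.Theory.
Local Open Scope ring_scope.


Section Ideal.
Variables (K : fieldType) (m : nat) (gs : seq {mpoly K[m]}).
Local Notation I := (in_ideal gs).

Lemma I0 : I 0.
Proof. by exists (fun _ => 0); rewrite big1 // => j _; rewrite mul0r. Qed.

Lemma ID p q : I p -> I q -> I (p + q).
Proof.
move=> [c1 ->] [c2 ->]; exists (fun j => c1 j + c2 j).
by rewrite -big_split; apply: eq_bigr => j _; rewrite mulrDl.
Qed.

Lemma IM q p : I p -> I (q * p).
Proof.
move=> [c ->]; exists (fun j => q * c j).
by rewrite mulr_sumr; apply: eq_bigr => j _; rewrite mulrA.
Qed.

Lemma IZ c p : I p -> I (c *: p).
Proof. by move=> Ip; rewrite -mul_mpolyC; apply: IM. Qed.

Lemma IN p : I p -> I (- p).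
Proof. by move=> Ip; rewrite -scaleN1r; apply: IZ. Qed.

Lemma IB p q : I p -> I q -> I (p - q).
Proof. by move=> Ip Iq; apply: ID => //; apply: IN. Qed.

Lemma Isum (J : finType) (P : pred J) (F : J -> {mpoly K[m]}) :
  (forall j, P j -> I (F j)) -> I (\sum_(j | P j) F j).
Proof.
by move=> h; apply: (big_ind I) => //; [exact: I0 | exact: ID].
Qed.

Lemma Igen g : g \in gs -> I g.
Proof.
move=> gin; have hi : (index g gs < size gs)%N by rewrite index_mem.
exists (fun j => if j == Ordinal hi then 1 else 0).
rewrite (bigD1 (Ordinal hi)) //= eqxx mul1r nth_index // big1 ?addr0 //.
by move=> j /negbTE ->; rewrite mul0r.
Qed.

Lemma Icoef0 (mu : 'X_{1..m}) p :
  (forall g, g \in gs -> exists w, g = 'X_[w] /\ ~~ (w <= mu)%MM) ->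
  I p -> p@_mu = 0.
Proof.
move=> hg [c ->]; rewrite raddf_sum big1 // => j _.
have [w [-> hw]] : exists w, gs`_j = 'X_[w] /\ ~~ (w <= mu)%MM.
  by apply: hg; apply: mem_nth.
apply/eqP; rewrite mcoeff_eq0 (perm_mem (msuppMX _ _)); apply/negP => /mapP.
by case=> m' _ e; move: hw; rewrite e lem_addr.
Qed.

End Ideal.


Section Dim.
Variables (K : fieldType) (m : nat) (gs : seq {mpoly K[m]}).
Local Notation I := (in_ideal gs).

Lemma indep_le (P : {mpoly K[m]} -> Prop) d k (s : 'I_k -> {mpoly K[m]}) :
  qdim gs P d -> (forall j, P (s j)) -> indep_mod gs s -> (k <= d)%N.
Proof.
move=> [_ hno] Ps inds; rewrite leqNgt; apply/negP => hk.
apply: (hno (fun j : 'I_d.+1 => s (widen_ord hk j))) => [j|c hc j]; first exact: Ps.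
pose c' (i : 'I_k) := if (i < d.+1)%N then c (inord i) else 0.
have E : \sum_(j < d.+1) c j *: s (widen_ord hk j) = \sum_(i < k) c' i *: s i.
  rewrite (big_ord_widen_leq _ _ _ hk) /=.
  rewrite [RHS](bigID (fun i : 'I_k => (i <= d)%N)) /= [X in _ = _ + X]big1 ?addr0.
    apply: eq_bigr => i hi; rewrite /c' ltnS hi; congr (_ *: s _).
    by apply: val_inj; rewrite /= inordK // ltnS.
  by move=> i /negbTE hi; rewrite /c' ltnS hi scale0r.
rewrite E in hc; have := inds c' hc (widen_ord hk j).
by rewrite /c' /= ltn_ord; rewrite (_ : inord j = j) //; apply: val_inj; rewrite /= inordK.
Qed.

Lemma qdim_exists (P : {mpoly K[m]} -> Prop) B :
  (forall k (s : 'I_k -> {mpoly K[m]}), (forall j, P (s j)) -> indep_mod gs s -> (k <= B)%N) ->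
  exists d, qdim gs P d.
Proof.
move=> hB.
suff: forall t k, (B - k)%N = t ->
    (exists s : 'I_k -> {mpoly K[m]}, (forall j, P (s j)) /\ indep_mod gs s) ->
    exists d, qdim gs P d.
  move=> /(_ _ 0%N erefl); apply.
  by exists (fun _ => 0); split => [[]|c _ []].
elim=> [|t IH] k ht hex.
  case: (classic (exists s : 'I_k.+1 -> {mpoly K[m]}, (forall j, P (s j)) /\ indep_mod gs s)).
    by case=> s [Ps iss]; have := hB _ _ Ps iss; rewrite -subn_gt0 ht.
  move=> hn; exists k; split => // s Ps iss; apply: hn; by exists s.
case: (classic (exists s : 'I_k.+1 -> {mpoly K[m]}, (forall j, P (s j)) /\ indep_mod gs s)).
  move=> h; apply: (IH k.+1) => //; by rewrite subnS ht.
move=> hn; exists k; split => // s Ps iss; apply: hn; by exists s.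
Qed.

Lemma homog_bound (P : {mpoly K[m]} -> Prop) D :
  (forall q, P q -> q \is D.-homog) ->
  forall k (s : 'I_k -> {mpoly K[m]}), (forall j, P (s j)) -> indep_mod gs s ->
  (k <= #|{: 'X_{1..m < D.+1}}|)%N.
Proof.
move=> hP k s Ps inds; rewrite leqNgt; apply/negP => hk.
pose A : 'M[K]_(k, #|{: 'X_{1..m < D.+1}}|) :=
  \matrix_(j, t) (s j)@_(val (enum_val t)).
have hr : (0 < \rank (kermx A))%N.
  by rewrite mxrank_ker subn_gt0 (leq_ltn_trans (rank_leq_col A) hk).
have [i hi] : exists i, row i (kermx A) != 0.
  apply/not_all_not_ex => hall; move: hr; rewrite lt0n mxrank_eq0.
  case/negP; apply/eqP/row_matrixP => i; rewrite row0.
  by move/negP: (hall i); rewrite negbK => /eqP.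
set c := row i (kermx A).
have cA : c *m A = 0 by rewrite -row_mul mulmx_ker row0.
have c0 : forall j, c 0 j = 0.
  apply: inds; rewrite (_ : \sum_(j < k) c 0 j *: s j = 0); first exact: I0.
  apply/mpolyP => mu; rewrite mcoeff0 raddf_sum /=.
  have [hd|hd] := eqVneq (mdeg mu) D; last first.
    by rewrite big1 // => j _; rewrite mcoeffZ (dhomog_nemf_coeff (hP _ (Ps j)) hd) mulr0.
  have hb : (mdeg mu < D.+1)%N by rewrite hd.
  pose b : 'X_{1..m < D.+1} := BMultinom hb.
  transitivity ((c *m A) 0 (enum_rank b)); last by rewrite cA mxE.
  rewrite mxE; apply: eq_bigr => j _; rewrite mcoeffZ !mxE enum_rankK //.
move: hi; rewrite -/c (_ : c = 0) ?eqxx //.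
by apply/matrixP => x j; rewrite ord1 c0 mxE.
Qed.

Definition mr (l : {mpoly K[m]}) (i : nat) : Prop :=
  exists a b r, qdim gs (fun p => p \is i.-homog) a /\
    qdim gs (fun p => p \is i.+1.-homog) b /\
    qdim gs (fun q => exists f, f \is i.-homog /\ q = l * f) r /\ r = minn a b.

Lemma dims_exist l i : l \is 1.-homog ->
  (exists a, qdim gs (fun p => p \is i.-homog) a) /\
  (exists b, qdim gs (fun p => p \is i.+1.-homog) b) /\
  (exists r, qdim gs (fun q => exists f, f \is i.-homog /\ q = l * f) r).
Proof.
move=> hl; split; [|split]; apply: qdim_exists; first exact: (homog_bound (fun q (h : q \is i.-homog) => h)).
  exact: (homog_bound (fun q (h : q \is i.+1.-homog) => h)).
have hP : forall q, (exists f, f \is i.-homog /\ q = l * f) -> q \is i.+1.-homog.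
  by move=> q [f [hf ->]]; exact: (dhomogM hl hf).
exact: (homog_bound hP).
Qed.

Lemma choose_f l i k (s : 'I_k -> {mpoly K[m]}) :
  (forall j, exists f, f \is i.-homog /\ s j = l * f) ->
  exists f : 'I_k -> {mpoly K[m]}, forall j, f j \is i.-homog /\ s j = l * f j.
Proof.
move=> h; exists (fun j => proj1_sig (constructive_indefinite_description _ (h j))).
move=> j; exact: (proj2_sig (constructive_indefinite_description _ (h j))).
Qed.

Lemma r_le_a l i a r :
  qdim gs (fun p => p \is i.-homog) a ->
  qdim gs (fun q => exists f, f \is i.-homog /\ q = l * f) r -> (r <= a)%N.
Proof.
move=> ha [[s [Ps iss]] _]; have [f hf] := choose_f Ps.
apply: (indep_le ha (fun j => proj1 (hf j))) => c hc; apply: iss.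
rewrite (eq_bigr (fun j => l * (c j *: f j))); last by move=> j _; rewrite (proj2 (hf j)) scalerAr.
by rewrite -mulr_sumr; apply: IM.
Qed.

Lemma r_le_b l i b r : l \is 1.-homog ->
  qdim gs (fun p => p \is i.+1.-homog) b ->
  qdim gs (fun q => exists f, f \is i.-homog /\ q = l * f) r -> (r <= b)%N.
Proof.
move=> hl hb [[s [Ps iss]] _]; apply: (indep_le hb _ iss) => j.
by have [f [hf ->]] := Ps j; exact: (dhomogM hl hf).
Qed.

Lemma mr_inj l i : l \is 1.-homog ->
  (forall g, g \is i.-homog -> I (l * g) -> I g) -> mr l i.
Proof.
move=> hl inj; have [[a ha] [[b hb] [r hr]]] := dims_exist i hl.
have ra := r_le_a ha hr; have rb := r_le_b hl hb hr.
have ar : (a <= r)%N.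
  case: ha => [[f [Pf isf]] _]; apply: (indep_le hr (s := fun j => l * f j)).
    by move=> j; exists (f j).
  move=> c hc; apply: isf; apply: inj.
    by apply: rpred_sum => j _; apply: rpredZ; apply: Pf.
  rewrite mulr_sumr; under eq_bigr do rewrite -scalerAr; exact: hc.
exists a, b, r; split => //; split => //; split => //.
have -> : r = a by apply/eqP; rewrite eqn_leq ra ar.
by apply/esym/minn_idPl; apply: leq_trans ar rb.
Qed.

Lemma mr_surj l i : l \is 1.-homog ->
  (forall q, q \is i.+1.-homog -> exists f, f \is i.-homog /\ I (q - l * f)) -> mr l i.
Proof.
move=> hl surj; have [[a ha] [[b hb] [r hr]]] := dims_exist i hl.
have ra := r_le_a ha hr; have rb := r_le_b hl hb hr.
have br : (b <= r)%N.
  case: hb => [[q [Pq isq]] _].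
  have [f hf] : exists f : 'I_b -> {mpoly K[m]}, forall j, f j \is i.-homog /\ I (q j - l * f j).
    exists (fun j => proj1_sig (constructive_indefinite_description _ (surj _ (Pq j)))).
    move=> j; exact: (proj2_sig (constructive_indefinite_description _ (surj _ (Pq j)))).
  apply: (indep_le hr (s := fun j => l * f j)).
    by move=> j; exists (f j); split => //; case: (hf j).
  move=> c hc; apply: isq.
  have -> : \sum_(j < b) c j *: q j =
     \sum_(j < b) c j *: (q j - l * f j) + \sum_(j < b) c j *: (l * f j).
    by rewrite -big_split; apply: eq_bigr => j _ /=; rewrite -scalerDr subrK.
  apply: ID => //; apply: Isum => j _; apply: IZ; by case: (hf j).
exists a, b, r; split => //; split => //; split => //.
have -> : r = b by apply/eqP; rewrite eqn_leq rb br.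
by apply/esym/minn_idPr; apply: leq_trans br ra.
Qed.

End Dim.


Section Gens.
Variables (K : fieldType) (m : nat) (e : rel 'I_m).
Local Notation gs := (artin_gens K e).
Local Notation I := (in_ideal gs).

Lemma gen_sq u : 'X_[U_(u) *+ 2] \in gs.
Proof.
rewrite -mpolyXn mem_cat; apply/orP; left.
by apply/mapP; exists u; rewrite ?mem_enum.
Qed.

Lemma gen_edge u v : e u v -> 'X_[U_(u) + U_(v)] \in gs.
Proof.
move=> huv; rewrite mpolyXD mem_cat; apply/orP; right.
by apply/mapP; exists (u, v); rewrite ?mem_enum.
Qed.

Lemma gen_cases g : g \in gs ->
  (exists u, g = 'X_[U_(u) *+ 2]) \/ (exists u v, e u v /\ g = 'X_[U_(u) + U_(v)]).
Proof.
rewrite mem_cat => /orP[/mapP[u _ ->]|/mapP[[u v] huv ->]].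
  by left; exists u; rewrite mpolyXn.
by right; exists u, v; rewrite mem_enum in huv; rewrite mpolyXD.
Qed.

Lemma Imono w mu : (w <= mu)%MM -> 'X_[w] \in gs -> I 'X_[mu].
Proof.
move=> hw hg; rewrite -(submK hw) mpolyXD; apply: IM; exact: Igen.
Qed.

Lemma coefMX0 (p : {mpoly K[m]}) w mu : ~~ (w <= mu)%MM -> (p * 'X_[w])@_mu = 0.
Proof.
move=> hw; apply/eqP; rewrite mcoeff_eq0 (perm_mem (msuppMX _ _)); apply/negP => /mapP.
by case=> m' _ e'; move: hw; rewrite e' lem_addr.
Qed.

Lemma kill2 a b p : a != b -> ~~ e a b -> ~~ e b a -> I p -> p@_(U_(a) + U_(b))%MM = 0.
Proof.
move=> ab eab eba; apply: Icoef0 => g /gen_cases [[u ->]|[u [v [huv ->]]]].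
  exists (U_(u) *+ 2)%MM; split => //; apply/negP => /mnm_lepP /(_ u).
  rewrite mulmnE mnmDE !mnm1E eqxx.
  move=> h; have /andP[/eqP au /eqP bu] : (a == u) && (b == u).
    by move: h; case: (a == u); case: (b == u).
  by rewrite au bu eqxx in ab.
exists (U_(u) + U_(v))%MM; split => //; apply/negP => /mnm_lepP h.
have hu := h u; have hv := h v; move: hu hv.
rewrite !mnmDE !mnm1E !eqxx.
have [<-|uv] := eqVneq u v.
  rewrite ?eqxx => hu _; have /andP[/eqP au /eqP bu] : (a == u) && (b == u).
    by move: hu; case: (a == u); case: (b == u).
  by rewrite au bu eqxx in ab.
move=> hu hv.
have [au|au] := eqVneq a u.
  have bv : b == v.
    move: hv; rewrite au (negbTE uv); by case: (b == v).
  by rewrite au (eqP bv) huv in eab.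
have bu : b == u by move: hu; rewrite (negbTE au); case: (b == u).
have av : a == v.
  move: hv; rewrite (eqP bu) (negbTE uv) addn0; by case: (a == v).
by rewrite (eqP bu) (eqP av) huv in eba.
Qed.

Lemma coef_sumvars2 a b (g : {mpoly K[m]}) : a != b ->
  (sum_vars K m * g)@_(U_(a) + U_(b))%MM = g@_U_(b) + g@_U_(a).
Proof.
move=> ab; rewrite /sum_vars mulr_suml raddf_sum (bigD1 a) //= (bigD1 b) 1?eq_sym //=.
rewrite big1 ?addr0.
  by rewrite !(mulrC _ g) mcoeffMX addmC mcoeffMX.
move=> u /andP[ub ua]; rewrite mulrC coefMX0 //.
rewrite lep1mP mnmDE !mnm1E.
by rewrite [a == u]eq_sym [b == u]eq_sym (negbTE ua) (negbTE ub).
Qed.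

End Gens.


Section Whisk.
Variables (K : fieldType) (n : nat) (H : rel 'I_n).
Local Notation e := (whisker H).
Local Notation gs := (artin_gens K e).
Local Notation I := (in_ideal gs).

Lemma sl (i : 'I_n) : @split n n (lshift n i) = inl 'I_n i.
Proof. exact: (unsplitK (inl _ i)). Qed.
Lemma sr (i : 'I_n) : @split n n (rshift n i) = inr 'I_n i.
Proof. exact: (unsplitK (inr _ i)). Qed.

Lemma wLL i j : e (lshift n i) (lshift n j) = H i j.
Proof. by rewrite /whisker !sl. Qed.
Lemma wLR i j : e (lshift n i) (rshift n j) = (i == j).
Proof. by rewrite /whisker sl sr. Qed.
Lemma wRL i j : e (rshift n i) (lshift n j) = (i == j).
Proof. by rewrite /whisker sl sr. Qed.
Lemma wRR i j : e (rshift n i) (rshift n j) = false.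
Proof. by rewrite /whisker !sr. Qed.

Lemma two_dist (i : 'I_n) : (2 < n)%N ->
  exists j k : 'I_n, [&& j != i, k != i & j != k].
Proof.
move=> n3.
have h0 : (0 < n)%N by apply: leq_trans n3. have h1 : (1 < n)%N by apply: leq_trans n3.
pose i0 := Ordinal h0; pose i1 := Ordinal h1; pose i2 := Ordinal n3.
have [e0|n0] := eqVneq i i0.
  by exists i1, i2; rewrite e0 -!val_eqE.
have [e1|n1] := eqVneq i i1.
  by exists i0, i2; rewrite e1 -!val_eqE.
by exists i0, i1; rewrite eq_sym n0 eq_sym n1 -val_eqE.
Qed.

Lemma inj1 (two : (2%:R : K) != 0) : (2 < n)%N ->
  forall g : {mpoly K[n + n]}, g \is 1.-homog -> I (sum_vars K (n + n) * g) -> I g.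
Proof.
move=> n3 g hg Ig.
have hc : forall a b, a != b -> ~~ e a b -> ~~ e b a -> g@_U_(b) + g@_U_(a) = 0.
  by move=> a b ab h1 h2; rewrite -coef_sumvars2 // (kill2 ab h1 h2 Ig).
have cy : forall i, g@_U_(rshift n i) = 0.
  move=> i; have [j [k /and3P[ji ki jk]]] := two_dist i n3.
  have d : forall x y : 'I_n, x != y -> rshift n x != rshift n y by move=> x y; rewrite eq_rshift.
  have E1 := hc _ _ (d _ _ ji) (negbT (wRR _ _)) (negbT (wRR _ _)).
  have E2 := hc _ _ (d _ _ ki) (negbT (wRR _ _)) (negbT (wRR _ _)).
  have E3 := hc _ _ (d _ _ jk) (negbT (wRR _ _)) (negbT (wRR _ _)).
  have : 2%:R * g@_U_(rshift n i) = 0.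
    rewrite mulr2n mulrDl mul1r.
    have -> : g@_U_(rshift n i) + g@_U_(rshift n i) =
       (g@_U_(rshift n i) + g@_U_(rshift n j)) + (g@_U_(rshift n i) + g@_U_(rshift n k))
       - (g@_U_(rshift n k) + g@_U_(rshift n j)) by ring.
    by rewrite E1 E2 E3 !addr0 subr0.
  by move/eqP; rewrite mulf_eq0 (negbTE two) => /eqP.
have cx : forall i, g@_U_(lshift n i) = 0.
  move=> i; have [j [k /and3P[ji _ _]]] := two_dist i n3.
  have ab : lshift n i != rshift n j by rewrite eq_lrshift.
  have := hc _ _ ab; rewrite wLR wRL eq_sym (negbTE ji) cy add0r; exact.
have g0 : g = 0.
  apply/mpolyP => mu; rewrite mcoeff0.
  have [hin|hnin] := boolP (mu \in msupp g); last exact: memN_msupp_eq0.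
  have := dhomog_mf hg hin => /eqP /mdeg1P [v /eqP ->].
  by case: (split_ordP v) => i ->.
by rewrite g0; exact: I0.
Qed.

End Whisk.


Section Surj.
Variables (K : fieldType) (n : nat) (H : rel 'I_n).
Local Notation e := (whisker H).
Local Notation gs := (artin_gens K e).
Local Notation I := (in_ideal gs).
Local Notation ell := (sum_vars K (n + n)).

Lemma le_U2 (mm : nat) (u v : 'I_mm) (mu : 'X_{1..mm}) : u != v ->
  (0 < mu u)%N -> (0 < mu v)%N -> (U_(u) + U_(v) <= mu)%MM.
Proof.
move=> uv hu hv; apply/mnm_lepP => x; rewrite mnmDE !mnm1E.
have [ux|ux] := eqVneq u x; have [vx|vx] := eqVneq v x => //=.
- by rewrite ux vx eqxx in uv.
- by rewrite -ux.
- by rewrite -vx.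
Qed.

Lemma le_Us (mm : nat) (u : 'I_mm) (mu : 'X_{1..mm}) :
  (1 < mu u)%N -> (U_(u) *+ 2 <= mu)%MM.
Proof.
move=> hu; apply/mnm_lepP => x; rewrite mulmnE mnm1E.
by have [ux|ux] := eqVneq u x => //=; rewrite -ux.
Qed.

Lemma heavy (mu : 'X_{1..n + n}) i :
  (1 < mu (lshift n i) + mu (rshift n i))%N -> I 'X_[mu].
Proof.
move=> h.
case: (leqP 2 (mu (lshift n i))) => h1.
  by apply: (Imono (le_Us h1)); apply: gen_sq.
case: (leqP 2 (mu (rshift n i))) => h2.
  by apply: (Imono (le_Us h2)); apply: gen_sq.
have a1 : (0 < mu (lshift n i))%N by move: h h1 h2; lia.
have a2 : (0 < mu (rshift n i))%N by move: h h1 h2; lia.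
apply: (Imono (le_U2 _ a1 a2)); first by rewrite eq_lrshift.
by apply: gen_edge; rewrite wLR.
Qed.

Lemma mdegW (mu : 'X_{1..n + n}) :
  mdeg mu = (\sum_(i < n) (mu (lshift n i) + mu (rshift n i)))%N.
Proof. by rewrite mdegE big_split_ord big_split. Qed.

Definition wt (mu : 'X_{1..n + n}) := (\sum_(i < n) mu (rshift n i))%N.

Lemma wtD a b : wt (a + b)%MM = (wt a + wt b)%N.
Proof. by rewrite /wt -big_split; apply: eq_bigr => i _; rewrite mnmDE. Qed.

Lemma wtUr k : wt U_(rshift n k)%MM = 1%N.
Proof.
rewrite /wt (bigD1 k) //= mnm1E eqxx big1 // => i ik.
by rewrite mnm1E eq_rshift eq_sym (negbTE ik).
Qed.

Lemma wtUl k : wt U_(lshift n k)%MM = 0%N.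
Proof. by rewrite /wt big1 // => i _; rewrite mnm1E eq_lrshift. Qed.

Lemma all_one (s : 'I_n -> nat) : (forall i, s i <= 1)%N ->
  (\sum_(i < n) s i)%N = n -> forall i, s i = 1%N.
Proof.
move=> h hs i; apply/eqP; rewrite eqn_leq h /=; rewrite lt0n; apply/negP => /eqP si.
have : (\sum_(j < n | j != i) s j <= \sum_(j < n | j != i) 1)%N by apply: leq_sum => j _; exact: h.
move: hs; rewrite (bigD1 i) //= si add0n => ->; rewrite sum1_card cardC1 card_ord.
by case: n i {h si} => [[]|k i] //=; rewrite ltnn.
Qed.

Definition Sset (q : {mpoly K[n + n]}) :=
  exists f, f \is n.-1.-homog /\ I (q - ell * f).

Lemma S_of_I q : I q -> Sset q.
Proof. by move=> Iq; exists 0; rewrite mulr0 subr0 rpred0. Qed.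

Lemma S_mono (ab : exists a b, H a b) (irr : forall a, ~~ H a a) :
  forall t (mu : 'X_{1..n + n}), wt mu = t -> mdeg mu = n -> Sset 'X_[mu].
Proof.
case: ab => a [b hab].
have ab : a != b by apply: contraTneq hab => ->; exact: irr.
elim=> [|t IH] mu ht hd.
- have [/existsP [i hi]|hno] := boolP [exists i : 'I_n, (1 < mu (lshift n i) + mu (rshift n i))%N].
    by apply: S_of_I; exact: heavy hi.
  have le1 : forall i, (mu (lshift n i) + mu (rshift n i) <= 1)%N.
    by move=> i; rewrite leqNgt; apply/negP => hi; case/existsP: hno; exists i.
  have eq1 := all_one le1 (esym (etrans (esym hd) (mdegW mu))).
  have r0 : forall i, mu (rshift n i) = 0%N.
    move=> i; apply/eqP; rewrite -leqn0 -ht /wt (bigD1 i) //=; exact: leq_addr.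
  have l1 : forall i, mu (lshift n i) = 1%N by move=> i; have := eq1 i; rewrite r0 addn0.
  have hle : (U_(lshift n a) + U_(lshift n b) <= mu)%MM.
    by apply: le_U2; rewrite ?eq_lshift ?l1.
  by apply: S_of_I; apply: (Imono hle); apply: gen_edge; rewrite wLL.
- have [/existsP [i hi]|hno] := boolP [exists i : 'I_n, (1 < mu (lshift n i) + mu (rshift n i))%N].
    by apply: S_of_I; exact: heavy hi.
  have le1 : forall i, (mu (lshift n i) + mu (rshift n i) <= 1)%N.
    by move=> i; rewrite leqNgt; apply/negP => hi; case/existsP: hno; exists i.
  have eq1 := all_one le1 (esym (etrans (esym hd) (mdegW mu))).
  have [k hk] : exists k, (0 < mu (rshift n k))%N.
    case: (boolP [exists k, (0 < mu (rshift n k))%N]) => [/existsP //|/existsPn h0].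
    move: ht; rewrite /wt big1 // => i _; apply/eqP; rewrite -leqn0 leqNgt; exact: h0.
  have rk1 : mu (rshift n k) = 1%N by have := eq1 k; move: hk; lia.
  set mT := (mu - U_(rshift n k))%MM.
  have emu : mu = (U_(rshift n k) + mT)%MM.
    by rewrite addmC /mT submK // lep1mP -lt0n.
  set mu' := (U_(lshift n k) + mT)%MM.
  have wT : wt mT = t by move: ht; rewrite emu wtD wtUr add1n => -[].
  have wT' : wt mu' = t by rewrite /mu' wtD wtUl.
  have dT : (mdeg mT).+1 = n by move: hd; rewrite {1}emu mdegD mdeg1 add1n.
  have d' : mdeg mu' = n by rewrite /mu' mdegD mdeg1 add1n.
  have [f' [hf' If']] := IH mu' wT' d'.
  pose R := \sum_(i < n | i != k) ('X_[(U_(lshift n i) + mT)%MM] + 'X_[(U_(rshift n i) + mT)%MM]) : {mpoly K[n + n]}.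
  have Eexp : ell * 'X_[mT] = 'X_[mu'] + 'X_[mu] + R.
    rewrite /sum_vars big_split_ord mulrDl !mulr_suml -big_split /= (bigD1 k) //=.
    by rewrite -!mpolyXD /mu' /R -emu; congr (_ + _); apply: eq_bigr => i _; rewrite -!mpolyXD.
  have mTe : forall x, mT x = (mu x - (rshift n k == x))%N by move=> x; rewrite mnmBE mnm1E.
  have IR : I R.
    apply: Isum => j jk.
    have hsum : (mT (lshift n j) + mT (rshift n j) = 1)%N.
      by rewrite !mTe eq_rlshift eq_rshift eq_sym (negbTE jk) !subn0; exact: eq1.
    apply: ID; apply: (heavy (i := j)); rewrite !mnmDE !mnm1E ?eq_lrshift ?eq_rlshift ?eqxx;
      by rewrite addnACA hsum.
  exists ('X_[mT] - f'); split.
    apply: rpredB => //; rewrite dhomogX; apply/eqP; by rewrite -[in RHS]dT.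
  have -> : 'X_[mu] - ell * ('X_[mT] - f') = - (('X_[mu'] - ell * f') + R).
    by rewrite mulrBr Eexp; ring.
  by apply: IN; apply: ID.
Qed.

Lemma surjn (ab : exists a b, H a b) (irr : forall a, ~~ H a a) q :
  q \is n.-homog -> Sset q.
Proof.
move=> hq; rewrite [q]mpolyE big_seq.
apply: (big_ind Sset).
- exact: (S_of_I (I0 gs)).
- move=> x y [fx [hx Ix]] [fy [hy Iy]]; exists (fx + fy); split; first exact: rpredD.
  by rewrite mulrDr opprD addrACA; apply: ID.
- move=> mu hmu; have [f [hf If]] := S_mono ab irr erefl (dhomog_mf hq hmu).
  exists (q@_mu *: f); split; first exact: rpredZ.
  by rewrite -scalerAr -scalerBr; apply: IZ.
Qed.

End Surj.


Lemma edge_exists (n : nat) (H : rel 'I_n) :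
  (n.+1 <= nedges (whisker H))%N -> exists a b, H a b.
Proof.
move=> hE; case: (classic (exists a b, H a b)) => // hno; exfalso.
have : (nedges (whisker H) <= n)%N.
  rewrite /nedges; apply: (@leq_trans #|[set (lshift n i, rshift n i) | i : 'I_n]|).
    apply: subset_leq_card; apply/subsetP => -[u v]; rewrite inE /= => /andP [luv huv].
    apply/imsetP; move: luv huv; case: (split_ordP u) => i ->; case: (split_ordP v) => j ->.
    - by rewrite wLL => _ hij; exfalso; apply: hno; exists i, j.
    - by rewrite wLR => _ /eqP ->; exists j.
    - by rewrite /= => lt; exfalso; move: lt (ltn_ord j); lia.
    - by rewrite wRR.
  by apply: leq_trans (leq_imset_card _ _) _; rewrite card_ord.
by move: hE; lia.
Qed.

Theorem corollary3p3 (K : fieldType) (p : nat) (n : nat) (H : rel 'I_n) :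
  prime p -> p != 2%N -> p \in [pchar K] ->
  simple_graph H ->
  (n.+1 <= nedges (whisker H))%N ->
  max_rank_at (whisker H) (sum_vars K (n + n)) 1 /\
  max_rank_at (whisker H) (sum_vars K (n + n)) n.-1.
Proof.
move=> pp p2 pK [Hsym Hirr] hE.
have [a [b hab]] := edge_exists hE.
have ab : a != b by apply: contraTneq hab => ->; rewrite (negbTE (Hirr b)).
have n2 : (1 < n)%N.
  have : nat_of_ord a <> nat_of_ord b by move=> h; move: ab; rewrite -val_eqE /= h eqxx.
  by move: (ltn_ord a) (ltn_ord b); lia.
have hl : sum_vars K (n + n) \is 1.-homog.
  by apply: rpred_sum => u _; rewrite dhomogX /= mdeg1.
have M2 : mr (artin_gens K (whisker H)) (sum_vars K (n + n)) n.-1.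
  apply: mr_surj hl _ => q; rewrite prednK; last by lia.
  move=> hq; exact: (surjn (ex_intro _ a (ex_intro _ b hab)) Hirr hq).
split; last exact: M2.
have [e2|n3] := eqVneq n 2%N.
  have e1 : n.-1 = 1%N by rewrite e2.
  by move: M2; rewrite e1.
have two : (2%:R : K) != 0.
  rewrite -(dvdn_pcharf pK); apply/negP => /(dvdn_leq (isT : (0 < 2)%N)) hp.
  have := prime_gt1 pp; move: p2 hp; case: p {pp pK} => [|[|[|]]] //.
have n3' : (2 < n)%N by move: n2 n3; lia.
exact: (mr_inj hl (inj1 two n3')).
Qed.
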